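(* In the transfer model and with the freeze algorithm $\mathrm{CalcFreeze}$ described in the context (applied after the cycle-elimination preprocessing, if $G$ has cycles), suppose no burn transactions occur between the disputed transaction $t_0$ and the freeze time, and let $s=\mathrm{val}(t_0)$ be the amount sent by $t_0=(v\to a_0)$. Then when the algorithm terminates, the total amount frozen is exactly $s$: $$ s=\sum_{a}\mathrm{toFreeze}(a), $$ where the sum ranges over all vertices $a$ of the (preprocessed) graph.
   Context: Transfer model. There is a finite set of addresses, each holding a nonnegative token balance. A transaction is a transfer $t=(a\to b)$ of value $\mathrm{val}(t)\ge 0$ from address $a$ to address $b$; it decreases the balance of $a$ by $\mathrm{val}(t)$ and increases the balance of $b$ by $\mathrm{val}(t)$. Transactions are totally ordered in time, and each transaction is valid: the sender's balance never becomes negative. There are no burns, i.e. no operation removes tokens from an address other than a transfer. The disputed transaction is $t_0=(v\to a_0)$ with $s=\mathrm{val}(t_0)$. The freeze happens at a time after $t_0$ and after all transactions considered. For an address $a$, $\mathrm{Bal}(a)$ denotes its balance at the freeze time; no amounts are frozen before this freeze. Transaction graph $G$. Consider the transactions strictly after $t_0$ and before the freeze. $G$ is the directed multigraph whose edges are those transactions $(b\to c)$ for which there is a directed path of such transactions from $a_0$ to $b$ ($b=a_0$ allowed). The vertices are $a_0$ and all endpoints of these edges. Each edge keeps its time and its value $\mathrm{val}$. Cycle elimination (preprocessing). While $G$ contains a directed cycle $c_0,\dots,c_{k-1}$ of edges, let $c$ be an edge of minimal value on it (ties broken arbitrarily) and $d=\mathrm{val}(c)$. Remove $c$ from $G$ and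 subtract $d$ from the value of every other edge of the cycle. Edge times are unchanged. Repeat until $G$ is acyclic. Algorithm $\mathrm{CalcFreeze}$ (on acyclic $G$): - Let $L$ be a topological order of the vertices of $G$, i.e. for every edge $a\to b$, $a$ precedes $b$. - Initialize $\mathrm{oblig}(a)=0$ for all $a\neq a_0$ and $\mathrm{oblig}(a_0)=s$. - For each $a$ in the order $L$: - Set $\tau=\mathrm{oblig}(a)$, $\mathrm{toFreeze}(a)=\min(\tau,\mathrm{Bal}(a))$ and $\tau'=\tau-\mathrm{toFreeze}(a)$. - If $\tau'\le 0$, proceed to the next vertex. - Otherwise, iterate over the outgoing edges $t=(a\to b)$ of $a$ in $G$ in reverse chronological order (most recent first). For each such edge set $\mathrm{ob}(b,t)=\min(\tau',\mathrm{val}(t))$, add $\mathrm{ob}(b,t)$ to $\mathrm{oblig}(b)$, and subtract $\mathrm{ob}(b,t)$ from $\tau'$. Stop iterating over the edges of $a$ as soon as $\tau'\le 0$. - Edges never processed have $\mathrm{ob}(b,t)=0$. *)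

(* Defs.v *)
From mathcomp Require Import all_boot all_order all_algebra.
Set Implicit Arguments. Unset Strict Implicit. Unset Printing Implicit Defensive.
Import Order.TTheory GRing.Theory Num.Theory.
Local Open Scope ring_scope.

Section Model.
Variables (R : realDomainType) (A : finType).

Definition tx := (A * A * R)%type.
Definition tsrc (t : tx) : A := t.1.1.
Definition tdst (t : tx) : A := t.1.2.
Definition tval (t : tx) : R := t.2.

(* Effect of a transfer on balances (no burns: only transfers exist). *)
Definition apply_tx (bal : A -> R) (t : tx) : A -> R :=
  fun x => bal x - (if x == tsrc t then tval t else 0)
                 + (if x == tdst t then tval t else 0).

Fixpoint valid_run (bal : A -> R) (ts : seq tx) : Prop :=
  match ts with
  | [::] => True
  | t :: ts' => [/\ 0 <= tval t, 0 <= bal (tsrc t) - tval t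
                  & valid_run (apply_tx bal t) ts']
  end.

Definition final_bal (bal : A -> R) (ts : seq tx) : A -> R := foldl apply_tx bal ts.

(* Edges of G: (time, transaction); time = position among the transactions
   strictly after t0. *)
Definition edge := (nat * tx)%type.
Definition etime (e : edge) : nat := e.1.
Definition esrc (e : edge) : A := tsrc e.2.
Definition edst (e : edge) : A := tdst e.2.
Definition eval (e : edge) : R := tval e.2.

Definition post_rel (post : seq tx) : rel A :=
  fun x y => has (fun t => (tsrc t == x) && (tdst t == y)) post.

Definition txgraph (a0 : A) (post : seq tx) : seq edge :=
  [seq (i, nth (a0, a0, 0) post i) |
     i <- iota 0 (size post) & connect (post_rel post) a0 (tsrc (nth (a0, a0, 0) post i))].

Definition vertices (a0 : A) (post : seq tx) : seq A :=
  undup (a0 :: flatten [seq [:: esrc e; edst e] | e <- txgraph a0 post]).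

Definition is_cycle (G cyc : seq edge) : Prop :=
  [/\ cyc != [::], all (fun e => e \in G) cyc, uniq cyc, uniq (map esrc cyc)
    & cycle (fun e f => edst e == esrc f) cyc].

Definition acyclic (G : seq edge) : Prop := ~ exists cyc, is_cycle G cyc.

Definition elim_step (G G' : seq edge) : Prop :=
  exists cyc c, [/\ is_cycle G cyc, c \in cyc,
    (forall e, e \in cyc -> eval c <= eval e)
    & G' = [seq (if e \in cyc then (etime e, (esrc e, edst e, eval e - eval c)) else e)
            | e <- G & e != c]].

Inductive elim_result : seq edge -> seq edge -> Prop :=
| elim_done G : acyclic G -> elim_result G G
| elim_more G G1 G2 : elim_step G G1 -> elim_result G1 G2 -> elim_result G G2.

Definition topo_order (V : seq A) (G : seq edge) (L : seq A) : Prop :=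
  uniq L /\ perm_eq L V /\
  forall e, e \in G -> (index (esrc e) L < index (edst e) L)%N.

Definition out_edges (G : seq edge) (a : A) : seq edge :=
  sort (fun e f => etime f <= etime e)%N [seq e <- G | esrc e == a].

Fixpoint distribute (tau : R) (es : seq edge) (ob : A -> R) : A -> R :=
  match es with
  | [::] => ob
  | e :: es' =>
      if tau <= 0 then ob else
      let x := Num.min tau (eval e) in
      distribute (tau - x) es' (fun b => if b == edst e then ob b + x else ob b)
  end.

(* Process one vertex a; state = (oblig, toFreeze). *)
Definition process (Bal : A -> R) (G : seq edge) (st : (A -> R) * (A -> R)) (a : A)
  : (A -> R) * (A -> R) :=
  let ob := st.1 in
  let fr := st.2 in
  let tau := ob a in
  let f := Num.min tau (Bal a) in
  (distribute (tau - f) (out_edges G a) ob, fun x => if x == a then f else fr x).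

Definition calc_freeze (Bal : A -> R) (G : seq edge) (a0 : A) (s : R) (L : seq A)
  : (A -> R) * (A -> R) :=
  foldl (process Bal G) ((fun x => if x == a0 then s else 0), fun _ => 0) L.

Definition toFreeze (Bal : A -> R) (G : seq edge) (a0 : A) (s : R) (L : seq A) : A -> R :=
  (calc_freeze Bal G a0 s L).2.

End Model.

(* Main.v *)
Require Import Defs.
From mathcomp Require Import all_boot all_order all_algebra.
From mathcomp Require Import lra.
Import Order.TTheory GRing.Theory Num.Theory.
Local Open Scope ring_scope.

Lemma dist_out (R : realDomainType) (A : finType) (es : seq (edge R A)) tau ob x :
  (forall e, e \in es -> edst e != x) -> distribute tau es ob x = ob x.
Proof.
elim: es tau ob => [|e es IH] tau ob //= H.
case: ifP => // _; rewrite IH; last by move=> f hf; apply: H; rewrite inE hf orbT.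
by rewrite eq_sym (negbTE (H e (mem_head _ _))).
Qed.

Lemma dist_le (R : realDomainType) (A : finType) (es : seq (edge R A)) tau ob x :
  (forall e, e \in es -> 0 <= eval e) ->
  distribute tau es ob x <= ob x + \sum_(e <- es | edst e == x) eval e.
Proof.
elim: es tau ob => [|e es IH] tau ob /= H; first by rewrite big_nil addr0.
have H' : forall f, f \in es -> 0 <= eval f by move=> f hf; apply: H; rewrite inE hf orbT.
have He := H e (mem_head _ _).
have Hs : 0 <= \sum_(f <- es | edst f == x) eval f.
  by rewrite big_seq_cond; apply: sumr_ge0 => f /andP[hf _]; exact: H' f hf.
rewrite big_cons; case: ifP => _.
  by case: ifP => _; lra.
apply: le_trans (IH _ _ H') _.
case: (eqVneq x (edst e)) => [->|hne]; rewrite ?eqxx ?(negbTE hne).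
  idtac.
  have : Num.min tau (eval e) <= eval e by rewrite ge_min lexx orbT.
  lra.
by [].
Qed.

Lemma sum_upd1 (R : realDomainType) (A : eqType) (S : seq A) (y : A) (ob : A -> R) m :
  uniq S -> y \in S ->
  \sum_(x <- S) (if x == y then ob x + m else ob x) = \sum_(x <- S) ob x + m.
Proof.
move=> uS yS.
rewrite (eq_bigr (fun x => ob x + (if x == y then m else 0))); last first.
  by move=> x _; case: ifP => _; rewrite ?addr0.
rewrite big_split /=; congr (_ + _).
rewrite (bigD1_seq y yS uS) /= eqxx big1 ?addr0 //.
by move=> x /negbTE ->.
Qed.

Lemma dist_sum (R : realDomainType) (A : finType) (S : seq A) (es : seq (edge R A)) tau ob :
  uniq S -> (forall e, e \in es -> edst e \in S) ->
  (forall e, e \in es -> 0 <= eval e) ->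
  0 <= tau -> tau <= \sum_(e <- es) eval e ->
  \sum_(x <- S) distribute tau es ob x = \sum_(x <- S) ob x + tau.
Proof.
move=> uS.
elim: es tau ob => [|e es IH] tau ob /= HS H t0 tle.
  rewrite big_nil in tle; have -> : tau = 0 by lra.
  by rewrite addr0.
case: ifP => tle0.
  have -> : tau = 0 by lra.
  by rewrite addr0.
have H' : forall f, f \in es -> 0 <= eval f by move=> f hf; apply: H; rewrite inE hf orbT.
have HS' : forall f, f \in es -> edst f \in S by move=> f hf; apply: HS; rewrite inE hf orbT.
rewrite big_cons in tle.
have Hs : 0 <= \sum_(f <- es) eval f.
  by rewrite big_seq; apply: sumr_ge0 => f hf; exact: H' f hf.
set m := Num.min tau (eval e).
have hm : (m = tau /\ tau <= eval e) \/ (m = eval e /\ eval e <= tau).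
  rewrite /m; case: (leP tau (eval e)) => h.
    by left.
  by right; split => //; exact: ltW.
rewrite IH //; last by case: hm => -[-> ?]; lra.
  rewrite sum_upd1 //; last exact: HS (mem_head _ _).
  rewrite -addrA; congr (_ + _); lra.
by case: hm => -[-> ?]; lra.
Qed.

Lemma out_sum (R : realDomainType) (A : finType) (G : seq (edge R A)) a (P : pred (edge R A)) (F : edge R A -> R) :
  \sum_(e <- out_edges G a | P e) F e = \sum_(e <- G | (esrc e == a) && P e) F e.
Proof. by rewrite /out_edges (perm_big _ (permEl (perm_sort _ _))) big_filter_cond. Qed.

Lemma out_mem (R : realDomainType) (A : finType) (G : seq (edge R A)) a e :
  e \in out_edges G a -> e \in G /\ esrc e = a.
Proof. by rewrite /out_edges mem_sort mem_filter => /andP[/eqP -> ->]. Qed.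

Lemma fr_out (R : realDomainType) (A : finType) Bal (G : seq (edge R A)) l st x :
  x \notin l -> (foldl (process Bal G) st l).2 x = st.2 x.
Proof.
elim: l st => [|a l IH] st //=; rewrite inE negb_or => /andP[xa xl].
by rewrite IH //= (negbTE xa).
Qed.

Lemma algo (R : realDomainType) (A : finType) (Bal : A -> R) (G : seq (edge R A)) (a0 : A) (s : R) :
  (forall e, e \in G -> 0 <= eval e) -> (forall x, 0 <= Bal x) ->
  forall l ob fr,
  uniq l ->
  (forall e, e \in G -> esrc e \in l -> edst e \in l /\ (index (esrc e) l < index (edst e) l)%N) ->
  (forall x, x \in l -> \sum_(e <- G | edst e == x) eval e + (if x == a0 then s else 0)
                       <= Bal x + \sum_(e <- G | esrc e == x) eval e) ->
  (forall x, x \in l -> ob x <= (if x == a0 then s else 0) +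
         \sum_(e <- G | (edst e == x) && (esrc e \notin l)) eval e) ->
  \sum_(a <- l) (foldl (process Bal G) (ob, fr) l).2 a = \sum_(a <- l) ob a.
Proof.
move=> Gpos Bpos l; elim: l => [|a l IH] ob fr; first by rewrite !big_nil.
move=> /= /andP[al ul] Hedge HF Hinv.
rewrite !big_cons.
set tau := ob a; set f := Num.min tau (Bal a).
set ob' := distribute (tau - f) (out_edges G a) ob.
have Hsub : forall x, x \in l -> x \in a :: l by move=> x hx; rewrite inE hx orbT.
have Hout_pos : forall e, e \in out_edges G a -> 0 <= eval e.
  by move=> e /out_mem [] /Gpos.
have Hout_dst : forall e, e \in out_edges G a -> edst e \in l.
  move=> e /out_mem [eG ea].
  have [] := Hedge e eG; first by rewrite ea mem_head.
  rewrite ea /= eqxx inE; case: eqP => //= ->; by rewrite eqxx.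
rewrite IH //; last first.
- move=> x xl.
  have xa : x != a by apply: contraNneq al => <-.
  apply: le_trans (@dist_le _ _ _ (tau - f) ob x Hout_pos) _.
  rewrite out_sum.
  have := Hinv x (Hsub x xl).
  have -> : \sum_(e <- G | (edst e == x) && (esrc e \notin l)) eval e =
     \sum_(e <- G | (edst e == x) && (esrc e \notin a :: l)) eval e +
     \sum_(e <- G | (esrc e == a) && (edst e == x)) eval e.
    rewrite (bigID (fun e => esrc e == a)) /= addrC; congr (_ + _).
      apply: eq_bigl => e; rewrite inE negb_or.
      by case: (edst e == x); case: (esrc e == a); case: (esrc e \in l).
    apply: eq_bigl => e; case: (esrc e =P a) => [->|_]; rewrite ?al ?andbT ?andbF //.
  lra.
- move=> x xl; exact: HF (Hsub x xl).
- move=> e eG el.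
  have ea : esrc e != a by apply: contraNneq al => <-.
  have [] := Hedge e eG; first by rewrite inE el orbT.
  have ea' : (a == esrc e) = false by rewrite eq_sym; exact: negbTE ea.
  rewrite /= ea' => hin; case: (eqVneq a (edst e)) => [eq|ne] //= hlt.
  split => //; move: hin; rewrite inE eq_sym (negbTE ne) //.
rewrite (@dist_sum _ _ _ _ _ ob ul Hout_dst Hout_pos).
- rewrite /= fr_out //= eqxx /tau; lra.
- rewrite /=; case: (leP (ob a) (Bal a)); lra.
rewrite /= out_sum.
have h1 := HF a (mem_head _ _).
have h2 := Hinv a (mem_head _ _).
have h3 : \sum_(e <- G | (edst e == a) && (esrc e \notin a :: l)) eval e <=
          \sum_(e <- G | edst e == a) eval e.
  rewrite [X in _ <= X](bigID (fun e => esrc e \notin a :: l)) /= lerDl.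
  by rewrite big_seq_cond sumr_ge0 // => e /andP[/Gpos].
have h4 : \sum_(e <- G | (esrc e == a) && true) eval e = \sum_(e <- G | esrc e == a) eval e.
  by apply: eq_bigl => e; rewrite andbT.
have h5 : 0 <= \sum_(e <- G | esrc e == a) eval e by rewrite big_seq_cond sumr_ge0 // => e /andP[/Gpos].
rewrite h4 /f /tau; case: (leP (ob a) (Bal a)) => h; lra.
Qed.
Set Implicit Arguments. Unset Strict Implicit.

Definition wv (R : realDomainType) (A : finType) (x : A) (e : edge R A) (v : R) : R :=
  (if edst e == x then v else 0) - (if esrc e == x then v else 0).

Definition net (R : realDomainType) (A : finType) (G : seq (edge R A)) (x : A) : R :=
  \sum_(e <- G) wv x e (eval e).

Lemma netE (R : realDomainType) (A : finType) (G : seq (edge R A)) x :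
  net G x = \sum_(e <- G | edst e == x) eval e - \sum_(e <- G | esrc e == x) eval e.
Proof. by rewrite /net /wv sumrB; congr (_ - _); rewrite [RHS]big_mkcond. Qed.

Definition Inv (R : realDomainType) (A : finType) (V : seq A) (G : seq (edge R A)) : Prop :=
  [/\ uniq (map (@etime R A) G), (forall e, e \in G -> 0 <= eval e)
    & (forall e, e \in G -> esrc e \in V /\ edst e \in V)].

Lemma path_map (R : realDomainType) (A : finType) (x : edge R A) p :
  path (fun e f => edst e == esrc f) x p -> map (@edst R A) (belast x p) = map (@esrc R A) p.
Proof.
elim: p x => [|y p IH] x //= /andP[/eqP -> hp].
by rewrite IH.
Qed.

Lemma cyc_perm (R : realDomainType) (A : finType) (cyc : seq (edge R A)) :
  cycle (fun e f => edst e == esrc f) cyc -> perm_eq (map (@edst R A) cyc) (map (@esrc R A) cyc).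
Proof.
case: cyc => [|x p] //= hp.
have := path_map hp; rewrite belast_rcons /= => ->.
by rewrite map_rcons perm_rcons.
Qed.

Lemma wvB (R : realDomainType) (A : finType) x (e : edge R A) u w :
  wv x e (u - w) = wv x e u - wv x e w.
Proof. by rewrite /wv; case: ifP; case: ifP => _ _; rewrite ?subr0 ?sub0r; lra. Qed.

Lemma elim_step_pres (R : realDomainType) (A : finType) V (G G1 : seq (edge R A)) :
  elim_step G G1 -> Inv V G -> Inv V G1 /\ forall x, net G1 x = net G x.
Proof.
move=> [cyc [c [[cne call cuniq _ ccyc] cin cmin ->]]] [uG Gpos GV].
set h := fun e : edge R A => if e \in cyc then (etime e, (esrc e, edst e, eval e - eval c)) else e.
have uG' : uniq G by move: uG; apply: map_uniq.
have cG : forall e, e \in cyc -> e \in G by move=> e he; exact: (allP call e he).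
have hmem : forall e1, e1 \in [seq h e | e <- G & e != c] ->
    exists e, [/\ e \in G, e1 = h e & e != c].
  by move=> e1 /mapP [e]; rewrite mem_filter => /andP[ec eG] ->; exists e.
split; first split.
- rewrite -map_comp (@eq_map _ _ _ (@etime R A)); last by move=> e; rewrite /= /h; case: ifP.
  apply: subseq_uniq uG; apply: map_subseq; exact: filter_subseq.
- move=> e1 /hmem [e [eG -> _]]; rewrite /h; case: ifP => hc; last exact: Gpos.
  rewrite /eval /=; have := cmin e hc; rewrite /eval; lra.
- by move=> e1 /hmem [e [eG -> _]]; rewrite /h; case: ifP => _; exact: GV e eG.
move=> x; rewrite /net big_map big_filter.
have Hh : forall e, wv x (h e) (eval (h e)) = wv x e (eval e) - (if e \in cyc then wv x e (eval c) else 0).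
  by move=> e; rewrite /h; case: ifP => _; rewrite ?subr0 // -wvB.
rewrite (eq_bigr _ (fun e _ => Hh e)) sumrB.
rewrite [in RHS](bigD1_seq c (cG c cin) uG') /=.
have H0 : \sum_(e <- G) (if e \in cyc then wv x e (eval c) else 0) = 0.
  rewrite -big_mkcond -big_filter.
  have pe : perm_eq [seq e <- G | e \in cyc] cyc.
    apply: uniq_perm; [exact: filter_uniq | exact: cuniq |].
    by move=> e; rewrite mem_filter; case hc: (e \in cyc) => //=; rewrite cG.
  rewrite (perm_big _ pe) /wv sumrB -(big_map (@edst R A) xpredT (fun y => if y == x then eval c else 0)).
  rewrite -(big_map (@esrc R A) xpredT (fun y => if y == x then eval c else 0)).
  by rewrite (perm_big _ (cyc_perm ccyc)) subrr.
move: H0; rewrite (bigD1_seq c (cG c cin) uG') /= cin => H0.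
lra.
Qed.

Lemma elim_pres (R : realDomainType) (A : finType) V (G G2 : seq (edge R A)) :
  elim_result G G2 -> Inv V G -> Inv V G2 /\ forall x, net G2 x = net G x.
Proof.
elim => [G0 _|G0 G1 G3 hs _ IH] hI; first by split.
have [hI1 hn1] := elim_step_pres hs hI.
have [hI3 hn3] := IH hI1.
by split => // x; rewrite hn3 hn1.
Qed.

Lemma vr_cat (R : realDomainType) (A : finType) (b : A -> R) p q :
  valid_run b (p ++ q) -> valid_run (final_bal b p) q.
Proof. by elim: p b => [|t p IH] b //= [_ _ /IH]. Qed.

Lemma vr_nonneg (R : realDomainType) (A : finType) (b : A -> R) ts :
  valid_run b ts -> (forall x, 0 <= b x) -> forall x, 0 <= final_bal b ts x.
Proof.
elim: ts b => [|t ts IH] b //= [h1 h2 hr] hb; apply: IH => // x.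
rewrite /apply_tx; case: eqP => [->|_]; case: ifP => _; have := hb x; lra.
Qed.

Lemma vr_vals (R : realDomainType) (A : finType) (b : A -> R) ts :
  valid_run b ts -> forall t, t \in ts -> 0 <= Defs.tval t.
Proof.
elim: ts b => [|t ts IH] b //= [h1 h2 hr] u; rewrite inE => /orP[/eqP -> //|]; exact: IH hr u.
Qed.

Definition wt (R : realDomainType) (A : finType) (x : A) (t : tx R A) : R :=
  (if tdst t == x then Defs.tval t else 0) - (if tsrc t == x then Defs.tval t else 0).

Lemma foldl_bal (R : realDomainType) (A : finType) (b : A -> R) ts x :
  foldl (@apply_tx R A) b ts x = b x + \sum_(t <- ts) wt x t.
Proof.
elim: ts b => [|t ts IH] b /=; first by rewrite big_nil addr0.
rewrite IH big_cons /apply_tx /wt; rewrite ![_ == x]eq_sym; lra.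
Qed.

Lemma tx_mem (R : realDomainType) (A : finType) (a0 : A) (post : seq (tx R A)) e :
  e \in txgraph a0 post -> exists i, [/\ (i < size post)%N,
     connect (post_rel post) a0 (tsrc (nth (a0, a0, 0) post i)) & e = (i, nth (a0, a0, 0) post i)].
Proof.
by move=> /mapP [i]; rewrite mem_filter mem_iota add0n => /andP [hc /andP[_ hi]] ->; exists i.
Qed.

Lemma vert_reach (R : realDomainType) (A : finType) (a0 : A) (post : seq (tx R A)) x :
  x \in vertices a0 post -> connect (post_rel post) a0 x.
Proof.
rewrite /vertices mem_undup inE => /orP[/eqP -> |]; first exact: connect0.
move=> /flattenP [l /mapP [e /tx_mem [i [hi hc ->]] ->]]; rewrite !inE => /orP [/eqP -> //| /eqP ->].
apply: connect_trans hc (connect1 _); apply/hasP; exists (nth (a0, a0, 0) post i).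
  exact: mem_nth.
by rewrite !eqxx.
Qed.

Lemma G0_inv (R : realDomainType) (A : finType) (a0 : A) (post : seq (tx R A)) :
  (forall t, t \in post -> 0 <= Defs.tval t) ->
  Inv (vertices a0 post) (txgraph a0 post).
Proof.
move=> hv; split.
- rewrite /txgraph -map_comp (@eq_map _ _ _ id) ?map_id; last by [].
  exact/filter_uniq/iota_uniq.
- by move=> e /tx_mem [i [hi _ ->]]; apply: hv; exact: mem_nth.
move=> e he; rewrite /vertices !mem_undup !inE.
have hm : [:: esrc e; edst e] \in [seq [:: esrc e0; edst e0] | e0 <- txgraph a0 post] by exact: map_f.
by split; apply/orP; right; apply/flattenP; exists [:: esrc e; edst e] => //; rewrite !inE eqxx ?orbT.
Qed.

Lemma net_bound (R : realDomainType) (A : finType) (a0 : A) (post : seq (tx R A)) x :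
  (forall t, t \in post -> 0 <= Defs.tval t) ->
  connect (post_rel post) a0 x ->
  net (txgraph a0 post) x <= \sum_(t <- post) wt x t.
Proof.
move=> hv hx.
rewrite /net /txgraph big_map big_filter (big_nth (a0, a0, 0)) /index_iota subn0.
rewrite [X in _ <= X](bigID (fun i => connect (post_rel post) a0 (tsrc (nth (a0, a0, 0) post i)))) /=.
rewrite lerDl big_seq_cond sumr_ge0 // => i /andP [hi hn].
rewrite mem_iota add0n in hi.
have hsx : (tsrc (nth (a0, a0, 0) post i) == x) = false.
  by apply/negbTE; apply: contraNneq hn => ->.
rewrite /wt hsx subr0; case: ifP => _ //; apply: hv; exact: mem_nth.
Qed.
Unset Implicit Arguments. Set Strict Implicit.

Lemma vr_pre (R : realDomainType) (A : finType) (b : A -> R) p q :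
  valid_run b (p ++ q) -> valid_run b p.
Proof. by elim: p b => [|t p IH] b //= [h1 h2 /IH]. Qed.

Theorem theoremA1 (R : realDomainType) (A : finType) (init : A -> R)
    (pre post : seq (tx R A)) (v a0 : A) (s : R) (G' : seq (edge R A)) (L : seq A) :
  (forall x, 0 <= init x) ->
  valid_run init (pre ++ (v, a0, s) :: post) ->
  elim_result (txgraph a0 post) G' ->
  topo_order (vertices a0 post) G' L ->
  \sum_(a <- L) toFreeze (final_bal init (pre ++ (v, a0, s) :: post)) G' a0 s L a = s.
Proof.
move=> hinit hvalid helim [uL [pL hidx]].
set Bal := final_bal init (pre ++ (v, a0, s) :: post).
set b0 := final_bal init pre.
have [hs hvs hpost] : valid_run b0 ((v, a0, s) :: post) := vr_cat hvalid.
have hb0 : forall x, 0 <= b0 x := vr_nonneg (@vr_pre _ _ _ _ _ hvalid) hinit.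
have postvals := vr_vals hpost.
have Bpos : forall x, 0 <= Bal x := vr_nonneg hvalid hinit.
have BalE : forall x, Bal x = apply_tx b0 (v, a0, s) x + \sum_(t <- post) wt x t.
  by move=> x; rewrite /Bal /final_bal foldl_cat /= foldl_bal.
have [[uG' posG' VG'] hnet] := elim_pres helim (G0_inv a0 postvals).
have a0L : a0 \in L by rewrite (perm_mem pL) /vertices mem_undup mem_head.
rewrite /toFreeze /calc_freeze.
rewrite (@algo _ _ Bal G' a0 s posG' Bpos L) //.
- rewrite (bigD1_seq a0 a0L uL) /= eqxx big1 ?addr0 //.
  by move=> x /negbTE ->.
- move=> e he _; split; last exact: hidx.
  by rewrite (perm_mem pL); case: (VG' e he).
- move=> x xL.
  have xV : x \in vertices a0 post by rewrite -(perm_mem pL).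
  have h1 := net_bound postvals (vert_reach xV).
  rewrite -(hnet x) netE in h1.
  have h2 := BalE x.
  have h3 : (if x == a0 then s else 0) <= apply_tx b0 (v, a0, s) x.
    rewrite /apply_tx /= /tval /=; have := hb0 x.
    have hvs' : 0 <= b0 v - s by move: hvs; rewrite /tsrc /Defs.tval.
    case: (x =P v) => [->|_]; case: ifP => _ h; lra.
  lra.
- move=> x xL; rewrite lerDl.
  by rewrite big_seq_cond sumr_ge0 // => e /andP[/posG'].
Qed.
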